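(* Let $(G',\sigma,G)$ be a left (resp. right) valid triplet, where $\sigma:\mathcal{A}^*\to\mathcal{B}^*$ is a return morphism. For every spanning tree $T'$ of $G'$, there exists a spanning tree $T$ of $G$ such that $(T',\sigma,T)$ is left (resp. right) valid, where spanning trees are regarded as colored trees (each edge having its own color).
   Context: A return morphism for $w\in\mathcal{B}^+$ is an injective non-erasing morphism $\sigma:\mathcal{A}^*\to\mathcal{B}^*$ such that $\sigma(a)w$ contains exactly two occurrences of $w$, a proper prefix and a proper suffix, for each $a\in\mathcal{A}$ ($w$ of maximal length if unspecified). $\mathcal{A}^L_{\sigma,s}=\{a:\sigma(a)\in\mathcal{B}^+s\}$, $\mathcal{A}^R_{\sigma,p}=\{a:\sigma(a)w\in p\mathcal{B}^+\}$; $\varphi^L_{\sigma,s}(a)$ for $a\in\mathcal{A}^L_{\sigma,s}$ is the letter $a'$ with $\sigma(a)\in\mathcal{B}^*a's$; $\varphi^R_{\sigma,p}(b)$ for $b\in\mathcal{A}^R_{\sigma,p}$ is the letter $b'$ with $\sigma(b)w\in pb'\mathcal{B}^*$; $\mathcal{T}^L(\sigma)$ is the set of longest common suffixes of $\sigma(a),\sigma(b)$, $a\ne b$, and $\mathcal{T}^R(\sigma)$ the set of longest common prefixes of $\sigma(a)w,\sigma(b)w$, $a\ne b$. Multi-clique $G(\{C_1,\dots,C_k\})$ on a vertex set $V$: every pair of distinct elements of $C_i$ joined by an edge of color $c_i$, colors distinct; colored multigraphs identified up to a bijection of colors. Acyclic for the coloring: each simple cycle is monochromatic. A colored tree is a multi-clique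 all of whose edges have different colors and whose underlying graph is a tree. For a multigraph $G$ on $\mathcal{A}$, $G^L_{\sigma,s}$ (resp. $G^R_{\sigma,p}$) is its subgraph induced by $\mathcal{A}^L_{\sigma,s}$ (resp. $\mathcal{A}^R_{\sigma,p}$). For $G=G(\{C_1,\dots,C_k\})$ on $\mathcal{A}$: $\sigma^L(G)=G(\{\varphi^L_{\sigma,s}(C_i):i\le k,s\in\mathcal{T}^L(\sigma)\})$, $\sigma^R(G)=G(\{\varphi^R_{\sigma,p}(C_i):i\le k,p\in\mathcal{T}^R(\sigma)\})$ on vertex set $\mathcal{B}$. A triplet $(G',\sigma,G)$ is left valid (resp. right valid) if (1) $G$ is a multi-clique acyclic for the coloring and connected; (2) for all $s\in\mathcal{T}^L(\sigma)$, $G^L_{\sigma,s}$ is connected (resp. for all $p\in\mathcal{T}^R(\sigma)$, $G^R_{\sigma,p}$ is connected); (3) $G'=\sigma^L(G)$ (resp. $G'=\sigma^R(G)$) is a multi-clique acyclic for the coloring and connected. *)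

(* Defs.v *)
From mathcomp Require Import all_boot.
Set Implicit Arguments. Unset Strict Implicit. Unset Printing Implicit Defensive.

(* A multi-clique G({C_1,...,C_k}) on a finite vertex set V is represented by
   the list [:: C_1; ...; C_k]; the colour of the edges of C_i is the index i. *)

Definition mc_adj (V : finType) (l : seq {set V}) : rel V :=
  fun u v => has (fun C : {set V} => (u \in C) && (v \in C)) l.

Definition mc_connected (V : finType) (l : seq {set V}) : Prop :=
  forall u v : V, connect (mc_adj l) u v.

Definition mc_connected_on (V : finType) (S : {set V}) (l : seq {set V}) : Prop :=
  forall u v : V, u \in S -> v \in S ->
    connect (fun x y => [&& x \in S, y \in S & mc_adj l x y]) u v.

(* A simple cycle of length n+2: distinct vertices vs 0, ..., vs (n+1), the
   i-th edge joins vs i and vs (i+1 mod n+2) and has colour cs i (so both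
   endpoints lie in clique number cs i).  For length 2 the two edges must be
   distinct, i.e. have distinct colours.  Acyclic for the coloring: every
   simple cycle is monochromatic. *)
Definition mc_cycle (V : finType) (l : seq {set V}) (n : nat)
    (vs : 'I_n.+2 -> V) (cs : 'I_n.+2 -> nat) : Prop :=
  injective vs /\
  (forall i : 'I_n.+2, cs i < size l /\ vs i \in nth set0 l (cs i)
                        /\ vs (ordS i) \in nth set0 l (cs i)) /\
  (n = 0 -> cs ord0 <> cs ord_max).

Definition mc_acyclic (V : finType) (l : seq {set V}) : Prop :=
  forall n (vs : 'I_n.+2 -> V) (cs : 'I_n.+2 -> nat),
    mc_cycle l vs cs -> forall i j, cs i = cs j.

(* equality of coloured multigraphs up to a bijection of colours
   (cliques with < 2 elements carry no edge, hence no colour) *)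
Definition mc_eq (V : finType) (l1 l2 : seq {set V}) : Prop :=
  perm_eq [seq C <- l1 | 1 < #|(C : {set V})|] [seq C <- l2 | 1 < #|(C : {set V})|].

(* colored tree: every colour class is a single edge, underlying graph a tree
   (connected, and without simple cycles) *)
Definition colored_tree (V : finType) (T : seq {set V}) : Prop :=
  all (fun C : {set V} => #|C| == 2) T /\ mc_acyclic T /\ mc_connected T.

Definition spanning_tree (V : finType) (T G : seq {set V}) : Prop :=
  colored_tree T /\ (forall e, e \in T -> has (fun C : {set V} => e \subset C) G).

Definition morph (A B : Type) (sigma : A -> seq B) (u : seq A) : seq B :=
  flatten (map sigma u).

Definition occurrences (B : eqType) (w x : seq B) : seq nat :=
  [seq i <- iota 0 (size x - size w).+1 |
     (size w <= size x) && (take (size w) (drop i x) == w)].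

Definition return_morphism (A : finType) (B : eqType) (sigma : A -> seq B)
    (w : seq B) : Prop :=
  w != [::] /\ injective (morph sigma) /\
  (forall a, sigma a != [::]) /\
  (forall a, occurrences w (sigma a ++ w) = [:: 0; size (sigma a)]).

Fixpoint lcp (T : eqType) (u v : seq T) : seq T :=
  match u, v with
  | x :: u', y :: v' => if x == y then x :: lcp u' v' else [::]
  | _, _ => [::]
  end.

Definition lcs (T : eqType) (u v : seq T) : seq T := rev (lcp (rev u) (rev v)).

Section Sets.
Variables (A B : finType) (sigma : A -> seq B) (w : seq B).

Definition TL : seq (seq B) :=
  undup [seq lcs (sigma p.1) (sigma p.2) | p in [pred p : A * A | p.1 != p.2]].
Definition TR : seq (seq B) :=
  undup [seq lcp (sigma p.1 ++ w) (sigma p.2 ++ w)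
        | p in [pred p : A * A | p.1 != p.2]].

Definition AL (s : seq B) : {set A} :=
  [set a | suffix s (sigma a) && (size s < size (sigma a))].
Definition AR (p : seq B) : {set A} :=
  [set a | prefix p (sigma a ++ w) && (size p < size (sigma a ++ w))].

Definition phiL (s : seq B) (C : {set A}) : {set B} :=
  [set b | [exists a in C, suffix (b :: s) (sigma a)]].
Definition phiR (p : seq B) (C : {set A}) : {set B} :=
  [set b | [exists a in C, prefix (rcons p b) (sigma a ++ w)]].

Definition sigmaL (G : seq {set A}) : seq {set B} :=
  [seq phiL s C | s <- TL, C <- G].
Definition sigmaR (G : seq {set A}) : seq {set B} :=
  [seq phiR p C | p <- TR, C <- G].

Definition left_valid (G' : seq {set B}) (G : seq {set A}) : Prop :=
  [/\ mc_acyclic G, mc_connected G,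
      (forall s, s \in TL -> mc_connected_on (AL s) G),
      mc_eq G' (sigmaL G) & mc_acyclic G' /\ mc_connected G'].

Definition right_valid (G' : seq {set B}) (G : seq {set A}) : Prop :=
  [/\ mc_acyclic G, mc_connected G,
      (forall p, p \in TR -> mc_connected_on (AR p) G),
      mc_eq G' (sigmaR G) & mc_acyclic G' /\ mc_connected G'].
End Sets.

(* Main.v *)
Require Import Defs.
From mathcomp Require Import all_boot zify.
Set Implicit Arguments. Unset Strict Implicit. Unset Printing Implicit Defensive.

Section Graph.
Variable V : finType.
Implicit Types (l : seq {set V}).

Definition avoid l (h : nat) : rel V :=
  fun x y => has (fun j => [&& j != h, x \in nth set0 l j & y \in nth set0 l j])
                 (iota 0 (size l)).

Lemma avoid_sym l h : symmetric (avoid l h).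
Proof. by move=> x y; apply: eq_has => j; case: (x \in _); case: (y \in _); rewrite ?andbF ?andbT. Qed.

Lemma lemK l h u v :
  mc_acyclic l -> h < size l -> u != v -> u \in nth set0 l h -> v \in nth set0 l h ->
  ~~ connect (avoid l h) u v.
Proof.
move=> ac hl uv uh vh; apply/negP => /connectP[p0 /shortenP[p pth up _] lastp].
case: p pth up lastp => [|x1 p1] pth up lastp; first by rewrite lastp eqxx in uv.
pose n := size p1.
pose vs (k : 'I_n.+2) := nth u [:: u, x1 & p1] k.
pose Q (k : 'I_n.+2) j := [&& j != h, vs k \in nth set0 l j & vs (ordS k) \in nth set0 l j].
pose cs (k : 'I_n.+2) := if k < n.+1 then find (Q k) (iota 0 (size l)) else h.
have hs : forall k : 'I_n.+2, k < n.+1 -> val (ordS k) = k.+1.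
  by move=> k kn /=; rewrite modn_small.
have hQ : forall k : 'I_n.+2, k < n.+1 -> has (Q k) (iota 0 (size l)).
  move=> k kn; move/pathP: pth => /(_ u k kn).
  by rewrite /Q /vs (hs k kn) /=.
have hcs : forall k : 'I_n.+2, k < n.+1 -> cs k < size l /\ Q k (cs k).
  move=> k kn; rewrite /cs kn; have := hQ k kn.
  rewrite has_find => hf; split; first by rewrite size_iota in hf.
  have := nth_find 0 (hQ k kn); rewrite nth_iota ?add0n //.
  by rewrite size_iota in hf.
have cyc : mc_cycle l vs cs.
  split.
    move=> i j /eqP; rewrite /vs nth_uniq ?(ltn_ord i) ?(ltn_ord j) //.
    by move/eqP/val_inj.
  split.
    move=> k; case: (ltnP k n.+1) => kn.
      by have [c1 /and3P[_ c2 c3]] := hcs k kn.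
    have km : val k = n.+1 by apply/eqP; rewrite eqn_leq kn -ltnS ltn_ord.
    have -> : ordS k = ord0 by apply/val_inj; rewrite /= km modnn.
    have e : nth u (x1 :: p1) n = v by rewrite lastp -nth_last.
    by rewrite /cs /vs km ltnn /= e.
  move=> n0; rewrite /cs /= ltnn.
  by have [_ /and3P[/eqP c1 _ _]] := hcs ord0 isT.
have := ac n vs cs cyc ord0 ord_max.
rewrite /cs /= ltnn.
by have [_ /and3P[/eqP c1 _ _]] := hcs ord0 isT.
Qed.

Definition inrel (T : seq {set V}) (D : {set V}) : rel V :=
  fun x y => has (fun e : {set V} => [&& x \in e, y \in e & e \subset D]) T.

Lemma avoid_step l h x y (C : {set V}) : C \in l -> C != nth set0 l h ->
  x \in C -> y \in C -> avoid l h x y.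
Proof.
move=> Cl Ch xC yC; apply/hasP; exists (index C l); first by rewrite mem_iota /= index_mem.
rewrite nth_index // xC yC !andbT; apply: contra Ch => /eqP <-.
by rewrite nth_index.
Qed.

Lemma lemL l (T : seq {set V}) h u v :
  mc_acyclic l -> mc_connected T ->
  (forall e, e \in T -> has (fun C : {set V} => e \subset C) l) ->
  h < size l -> u \in nth set0 l h -> v \in nth set0 l h ->
  connect (inrel T (nth set0 l h)) u v.
Proof.
move=> ac tc ts hl uh vh.
pose D := nth set0 l h.
pose I c := exists2 p0, (p0 \in D) && connect (inrel T D) u p0 & connect (avoid l h) p0 c.
have step : forall c z, mc_adj T c z -> I c -> I z.
  move=> c z /hasP[e eT /andP[ce ze]] [p0 /andP[p0D up0] p0c].
  have [eD|eD] := boolP (e \subset D).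
    have cD : c \in D by apply: (subsetP eD).
    have p0c' : p0 = c.
      apply/eqP; apply/negPn/negP => ne.
      by move: (lemK ac hl ne p0D cD); rewrite p0c.
    subst p0; exists z; last exact: connect0.
    rewrite (subsetP eD) //=; apply: connect_trans up0 (connect1 _).
    by apply/hasP; exists e; rewrite // ce ze.
  exists p0; first by rewrite p0D.
  apply: connect_trans p0c (connect1 _).
  have /hasP[C Cl eC] := ts e eT.
  apply: (@avoid_step _ _ _ _ C) => //; last by apply: (subsetP eC).
    by apply: contra eD => /eqP CD; rewrite /D -CD.
  by apply: (subsetP eC).
have Iv : I v.
  have /connectP[p pth ->] := tc u v.
  have gen : forall q c, path (mc_adj T) c q -> I c -> I (last c q).
    elim=> [|z q IH] c //= /andP[cz pth'] Ic.
    exact: IH _ pth' (step _ _ cz Ic).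
  by apply: gen pth _; exists u; rewrite ?uh ?connect0.
case: Iv => p0 /andP[p0D up0] p0v.
have -> : v = p0.
  apply/eqP; apply/negPn/negP => ne.
  by move: (lemK ac hl ne vh p0D); rewrite sym_connect_sym ?p0v //; apply: avoid_sym.
exact: up0.
Qed.
End Graph.
Section Words.
Variable B : eqType.
Variable x0 : B.
Implicit Types (u v p t : seq B).

Lemma lcp_prefl u v : prefix (lcp u v) u.
Proof. elim: u v => [|a u IH] [|b v] //=; case: ifP => // _ /=; by rewrite eqxx IH. Qed.

Lemma lcpC u v : lcp u v = lcp v u.
Proof. elim: u v => [|a u IH] [|b v] //=; rewrite eq_sym; case: ifP => // /eqP ->; by rewrite IH. Qed.

Lemma lcp_prefr u v : prefix (lcp u v) v.
Proof. by rewrite lcpC lcp_prefl. Qed.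

Lemma lcp_max t u v : prefix t u -> prefix t v -> prefix t (lcp u v).
Proof.
elim: t u v => [|c t IH] u v; first by move=> *; rewrite prefix0s.
case: u => [|a u] //; case: v => [|b v]; first by case: (c == a).
move=> /andP[/eqP <- tu] /andP[/eqP <- tv].
by rewrite /= !eqxx /= ?eqxx IH.
Qed.

Lemma lcp_diff u v : size (lcp u v) < size u -> size (lcp u v) < size v ->
  nth x0 u (size (lcp u v)) != nth x0 v (size (lcp u v)).
Proof.
elim: u v => [|a u IH] [|b v] //=; case: ifP => [/eqP ->|/negbT ab] //=; exact: IH.
Qed.

Lemma prefix_rconsE p y u :
  prefix (rcons p y) u = [&& prefix p u, size p < size u & nth x0 u (size p) == y].
Proof.
elim: p u => [|c p IH] [|a u] //=; first by rewrite prefix0s andbT eq_sym.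
by rewrite IH ltnS andbA.
Qed.

Lemma lcp_eq p u v : prefix p u -> prefix p v -> size p < size u -> size p < size v ->
  nth x0 u (size p) != nth x0 v (size p) -> lcp u v = p.
Proof.
elim: p u v => [|c p IH] [|a u] [|b v] //=.
  by case: ifP => // /eqP ->; rewrite eqxx.
move=> /andP[/eqP <- pu] /andP[/eqP <- pv] su sv d; rewrite eqxx; congr cons.
exact: IH.
Qed.
End Words.

Lemma prefix_size_eq (T : eqType) (s1 s2 : seq T) : prefix s1 s2 -> size s2 <= size s1 -> s1 = s2.
Proof.
move=> /prefixP[r ->]; rewrite size_cat -{2}(addn0 (size s1)) leq_add2l leqn0 size_eq0.
by move/eqP ->; rewrite cats0.
Qed.

Lemma nth_prefix (T : eqType) (x0 : T) (q u : seq T) i : prefix q u -> i < size q -> nth x0 u i = nth x0 q i.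
Proof. by move=> /prefixP[r ->] iq; rewrite nth_cat iq. Qed.

Lemma lift_seq (X Y : Type) (dx : X) (dy : Y) (R : X -> Y -> Prop) (s : seq X) :
  (forall i, i < size s -> exists y, R (nth dx s i) y) ->
  exists t : seq Y, size t = size s /\ forall i, i < size s -> R (nth dx s i) (nth dy t i).
Proof.
elim: s => [|x s IH] H; first by exists [::].
have [y Ry] := H 0 isT.
have [t [st Rt]] : exists t : seq Y, size t = size s /\ forall i, i < size s -> R (nth dx s i) (nth dy t i).
  by apply: IH => i si; apply: (H i.+1).
by exists (y :: t); split=> [/=|[|i] /= si]; rewrite ?st //; apply: Rt.
Qed.

Lemma ordS_val n (k : 'I_n.+2) : nat_of_ord (ordS k) = if k < n.+1 then k.+1 else 0.
Proof.
rewrite /=; case: ifP => kn; first by rewrite modn_small.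
have -> : val k = n.+1 by apply/eqP; rewrite eqn_leq -ltnS ltn_ord leqNgt kn.
by rewrite modnn.
Qed.

Lemma ordSS n (k : 'I_n.+2) : ordS (ordS k) = k -> n = 0.
Proof.
move=> e; have := congr1 (@nat_of_ord n.+2) e; rewrite !ordS_val.
have := ltn_ord k; case: (ltnP k n.+1) => h1 /=.
  by case: (ltnP k.+1 n.+1) => h2 /= *; lia.
by move=> *; lia.
Qed.

Lemma ord2_cases n (k k0 : 'I_n.+2) : n = 0 -> k != k0 ->
  (k = ord0 /\ k0 = ord_max) \/ (k = ord_max /\ k0 = ord0).
Proof.
move=> n0 kk; have hk := ltn_ord k; have hk0 := ltn_ord k0.
have h : forall a b : 'I_n.+2, nat_of_ord a = nat_of_ord b -> a = b by move=> a b; apply: val_inj.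
have [e|e] : nat_of_ord k = 0 \/ nat_of_ord k = 1 by lia.
  have [e0|e0] : nat_of_ord k0 = 0 \/ nat_of_ord k0 = 1 by lia.
    by move: kk; rewrite (h k k0) ?eqxx // e e0.
  by left; split; apply: h; rewrite /= ?e ?e0 ?n0.
have [e0|e0] : nat_of_ord k0 = 0 \/ nat_of_ord k0 = 1 by lia.
  by right; split; apply: h; rewrite /= ?e ?e0 ?n0.
by move: kk; rewrite (h k k0) ?eqxx // e e0.
Qed.

Lemma foldr_lcp_pref (T : eqType) (ws : seq (seq T)) w0 w :
  w \in w0 :: ws -> prefix (foldr (@lcp T) w0 ws) w.
Proof.
elim: ws w => [|w1 ws IH] w; first by rewrite inE => /eqP ->; apply: prefix_refl.
rewrite /= !inE => /or3P[/eqP->|/eqP->|wws].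
- by apply: prefix_trans (lcp_prefr _ _) (IH _ (mem_head _ _)).
- exact: lcp_prefl.
- by apply: prefix_trans (lcp_prefr _ _) (IH _ _); rewrite inE wws orbT.
Qed.

Lemma foldr_lcp_max (T : eqType) (ws : seq (seq T)) w0 t :
  (forall w, w \in w0 :: ws -> prefix t w) -> prefix t (foldr (@lcp T) w0 ws).
Proof.
elim: ws => [|w1 ws IH] H; first by apply: H; rewrite mem_head.
rewrite /=; apply: lcp_max; first by apply: H; rewrite !inE eqxx orbT.
by apply: IH => w; rewrite inE => /orP[/eqP->|ww]; apply: H; rewrite !inE ?eqxx ?ww ?orbT.
Qed.

Lemma filter_allpairs_swap (X : Type) (Y Z : eqType) (f : X -> Y -> Z) (P : pred Z)
    (s : seq X) (t : seq Y) (g : Y -> Z) :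
  (forall y, y \in t -> filter P [seq f x y | x <- s] = [:: g y]) ->
  perm_eq (filter P [seq f x y | x <- s, y <- t]) (map g t).
Proof.
elim: t => [|y t IH] H; first by rewrite allpairs0r.
have h : perm_eq [seq f x y | x <- s, y <- y :: t]
    ([seq f x y | x <- s] ++ [seq f x y | x <- s, y <- t]).
  by rewrite (perm_allpairs_consr f s (fun=> y) (fun=> t)).
rewrite (permPl (perm_filter P h)).
rewrite filter_cat H ?mem_head //= perm_cons; apply: IH => y' y't.
by apply: H; rewrite inE y't orbT.
Qed.

Section Core.
Variables (A B : finType) (v : A -> seq B) (x0 : B) (L : seq (seq B)).
Hypothesis vpf : forall a b, prefix (v a) (v b) -> a = b.
Hypothesis vne : forall a, v a != [::].
Hypothesis Luniq : uniq L.
Hypothesis Lin : forall a b, a != b -> lcp (v a) (v b) \in L.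

Definition AP (p : seq B) : {set A} := [set a | prefix p (v a) && (size p < size (v a))].
Definition phP (p : seq B) (C : {set A}) : {set B} :=
  [set b | [exists a in C, prefix (rcons p b) (v a)]].
Definition sig (G : seq {set A}) : seq {set B} := [seq phP p C | p <- L, C <- G].
Definition valid (G' : seq {set B}) (G : seq {set A}) : Prop :=
  [/\ mc_acyclic G, mc_connected G,
      (forall p, p \in L -> mc_connected_on (AP p) G),
      mc_eq G' (sig G) & mc_acyclic G' /\ mc_connected G'].
Definition letter (a : A) (p : seq B) := nth x0 (v a) (size p).

Lemma inphP y p C : (y \in phP p C) = [exists a in C, (a \in AP p) && (letter a p == y)].
Proof.
rewrite inE; apply: eq_existsb => a; rewrite (prefix_rconsE x0) inE /letter.
by case: (a \in C); rewrite //= andbA.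
Qed.

Lemma AP_lcp a b : a != b ->
  [/\ a \in AP (lcp (v a) (v b)), b \in AP (lcp (v a) (v b))
    & letter a (lcp (v a) (v b)) != letter b (lcp (v a) (v b))].
Proof.
move=> ab.
have sa : size (lcp (v a) (v b)) < size (v a).
  rewrite ltnNge; apply/negP => h; move: ab.
  have e := prefix_size_eq (lcp_prefl (v a) (v b)) h.
  by rewrite (vpf (_ : prefix (v a) (v b))) ?eqxx // -e lcp_prefr.
have sb : size (lcp (v a) (v b)) < size (v b).
  rewrite ltnNge; apply/negP => h; move: ab.
  have e := prefix_size_eq (lcp_prefr (v a) (v b)) h.
  by rewrite (vpf (_ : prefix (v b) (v a))) ?eqxx // -e lcp_prefl.
by rewrite !inE lcp_prefl lcp_prefr sa sb; split => //; apply: lcp_diff.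
Qed.

Lemma lcp_AP a b p : a \in AP p -> b \in AP p -> letter a p != letter b p ->
  lcp (v a) (v b) = p.
Proof.
rewrite /AP /letter !inE => /andP[pa sa] /andP[pb sb] d.
exact: (lcp_eq pa pb sa sb d).
Qed.

Lemma AP_deeper a b p : a \in AP p -> b \in AP p -> letter a p = letter b p -> a != b ->
  a \in AP (rcons p (letter a p)) /\ b \in AP (rcons p (letter a p)).
Proof.
move=> aP bP e ab.
have pa : prefix (rcons p (letter a p)) (v a).
  by move: aP; rewrite inE (prefix_rconsE x0) => /andP[-> ->]; rewrite eqxx.
have pb : prefix (rcons p (letter a p)) (v b).
  by move: bP; rewrite inE (prefix_rconsE x0) e => /andP[-> ->]; rewrite eqxx.
rewrite !inE pa pb /=; split.
  rewrite ltn_neqAle size_prefix // andbT; apply/negP => /eqP h.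
  have := prefix_size_eq pa; rewrite h leqnn => /(_ isT) ea.
  by move: ab; rewrite (vpf (_ : prefix (v a) (v b))) ?eqxx // -ea.
rewrite ltn_neqAle size_prefix // andbT; apply/negP => /eqP h.
have := prefix_size_eq pb; rewrite h leqnn => /(_ isT) eb.
by move: ab; rewrite (vpf (_ : prefix (v b) (v a))) ?eqxx // -eb.
Qed.

Lemma AP_sub p y : AP (rcons p y) \subset AP p.
Proof.
apply/subsetP => a; rewrite !inE (prefix_rconsE x0) => /andP[/and3P[-> ps _] _] /=.
exact: ps.
Qed.

Lemma letter_deep a p q : a \in AP q -> prefix p q -> size p < size q ->
  letter a p = nth x0 q (size p).
Proof. by rewrite inE => /andP[qa _] pq sp; rewrite /letter (nth_prefix _ qa). Qed.


Lemma count2_idx (T : Type) (d : T) (P : pred T) (l : seq T) : 1 < count P l ->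
  exists i j, [/\ i < j, j < size l, P (nth d l i) & P (nth d l j)].
Proof.
elim: l => [|x l IH] //=; case: (boolP (P x)) => Px /=.
  rewrite add1n ltnS -has_count => hl.
  exists 0, (find P l).+1; split => //=; first by rewrite ltnS -has_find.
  exact: nth_find.
rewrite add0n => /IH[i [j [ij jl Pi Pj]]].
by exists i.+1, j.+1.
Qed.

Lemma acyc2 (V : finType) (l : seq {set V}) i j (x y : V) : mc_acyclic l -> i != j ->
  i < size l -> j < size l -> x != y ->
  x \in nth set0 l i -> y \in nth set0 l i -> x \in nth set0 l j -> y \in nth set0 l j -> False.
Proof.
move=> ac ij il jl xy xi yi xj yj.
have := lemK ac il xy xi yi; rewrite connect1 //.
by apply/hasP; exists j; rewrite ?mem_iota //= eq_sym ij xj yj.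
Qed.

Section Main.
Variables (G : seq {set A}) (Gp Tp : seq {set B}).
Hypothesis hval : valid Gp G.
Hypothesis st : spanning_tree Tp Gp.

Definition Lift (e : {set B}) (t : seq B * A * A) : Prop :=
  [/\ t.1.1 \in L, exists2 C, C \in G & (t.1.2 \in C) && (t.2 \in C),
      (t.1.2 \in AP t.1.1) && (t.2 \in AP t.1.1),
      letter t.1.2 t.1.1 != letter t.2 t.1.1 &
      e = [set letter t.1.2 t.1.1; letter t.2 t.1.1]].

Lemma big_in_Gp p C : p \in L -> C \in G -> 1 < #|phP p C| -> phP p C \in Gp.
Proof.
case: hval => _ _ _ eqG _ pL CG big.
have : phP p C \in [seq D <- sig G | 1 < #|(D : {set B})|].
  by rewrite mem_filter big; apply: allpairs_f.
by rewrite -(perm_mem eqG) mem_filter => /andP[].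
Qed.

Lemma lift_exists e : e \in Tp -> exists t, Lift e t.
Proof.
case: hval => _ _ _ eqG _; case: st => [[allTp [_ _]] subTp] eT.
have e2 : #|e| == 2 := allP allTp e eT.
have /hasP[D DGp eD] := subTp e eT.
have Dbig : 1 < #|D| by rewrite (leq_trans _ (subset_leq_card eD)) // (eqP e2).
have : D \in [seq C <- Gp | 1 < #|(C : {set B})|] by rewrite mem_filter Dbig.
rewrite (perm_mem eqG) mem_filter => /andP[_ /allpairsP[[p C] [/= pL CG DE]]].
case/cards2P: e2 => x [y [xy Ee]].
have : x \in D by apply: (subsetP eD); rewrite Ee set21.
have : y \in D by apply: (subsetP eD); rewrite Ee set22.
rewrite DE !inphP => /exists_inP[b bC /andP[bP /eqP by_]] /exists_inP[a aC /andP[aP /eqP ax]].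
exists (p, a, b); split => //=; first by exists C; rewrite // aC bC.
- by rewrite aP bP.
- by rewrite ax by_.
- by rewrite ax by_.
Qed.


Lemma Tp_pair e : e \in Tp -> exists x y, x != y /\ e = [set x; y].
Proof. by case: st => [[allTp _] _] eT; apply/cards2P; apply: (allP allTp). Qed.

Variable a0 : A.
Variable tl : seq (seq B * A * A).
Hypothesis stl : size tl = size Tp.
Definition dt : seq B * A * A := ([::], a0, a0).
Hypothesis Htl : forall i, i < size Tp -> Lift (nth set0 Tp i) (nth dt tl i).

Definition lev i := (nth dt tl i).1.1.
Definition la i := (nth dt tl i).1.2.
Definition lb i := (nth dt tl i).2.
Definition T : seq {set A} := [seq [set t.1.2; t.2] | t <- tl].

Lemma sizeT : size T = size Tp. Proof. by rewrite size_map stl. Qed.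

Lemma nthT i : i < size Tp -> nth set0 T i = [set la i; lb i].
Proof. by move=> iT; rewrite (nth_map dt) // stl. Qed.

Lemma liftP i : i < size Tp ->
  [/\ lev i \in L, exists2 C, C \in G & (la i \in C) && (lb i \in C),
      (la i \in AP (lev i)) && (lb i \in AP (lev i)),
      letter (la i) (lev i) != letter (lb i) (lev i) &
      nth set0 Tp i = [set letter (la i) (lev i); letter (lb i) (lev i)]].
Proof. by move=> iT; case: (Htl iT). Qed.

Lemma lev_uniq i q C : i < size Tp -> q \in L -> C \in G ->
  nth set0 Tp i \subset phP q C -> q = lev i.
Proof.
move=> iT qL CG eq_.
have [levL [Ci CiG /andP[laC lbC]] /andP[laP lbP] dif Ei] := liftP iT.
apply/eqP; apply/negPn/negP => nq.
set e := nth set0 Tp i.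
have [x [y [xy Exy]]] : exists x y, x != y /\ e = [set x; y] by apply: Tp_pair; rewrite mem_nth.
have ce : #|e| = 2 by rewrite Exy cards2 xy.
pose P := fun D : {set B} => e \subset D.
have ePi : P (phP (lev i) Ci).
  apply/subsetP => z; rewrite /e Ei => /set2P[] ->; rewrite inphP; apply/exists_inP.
    by exists (la i); rewrite // laP eqxx.
  by exists (lb i); rewrite // lbP eqxx.
have c1 : 1 < count P (sig G).
  have qr : q \in rem (lev i) L by rewrite mem_rem_uniq // inE nq qL.
  have pL : perm_eq L (lev i :: q :: rem q (rem (lev i) L)).
    apply: perm_trans (perm_to_rem levL) _; rewrite perm_cons.
    exact: perm_to_rem.
  rewrite /sig (permP (perm_allpairs (fun p C => phP p C) pL (perm_refl G))) /= !count_cat.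
  have h1 : 0 < count P [seq phP (lev i) C | C <- G].
    by rewrite -has_count; apply/hasP; exists (phP (lev i) Ci) => //; apply: map_f.
  have h2 : 0 < count P [seq phP q C | C <- G].
    by rewrite -has_count; apply/hasP; exists (phP q C) => //; apply: map_f.
  by rewrite addnA (leq_trans _ (leq_addr _ _)) // -(addn1 1) leq_add.
have bigP : forall D, P D -> 1 < #|D|.
  move=> D PD; apply: leq_trans (subset_leq_card PD); by rewrite ce.
case: hval => _ _ _ eqG [acGp _].
have c2 : 1 < count P Gp.
  have := permP eqG P; rewrite !count_filter.
  have E : count (predI P (fun D : {set B} => 1 < #|D|)) (sig G) = count P (sig G).
    by apply: eq_count => D /=; case PD: (P D) => //=; apply: bigP.
  rewrite E => h; apply: leq_trans c1 _; rewrite -h.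
  by apply: sub_count => D /andP[].
have [i1 [i2 [i12 i2s Pi1 Pi2]]] := count2_idx set0 c2.
apply: (acyc2 acGp (_ : i1 != i2) (ltn_trans i12 i2s) i2s xy).
- by rewrite ltn_eqF.
- by apply: (subsetP Pi1); rewrite Exy set21.
- by apply: (subsetP Pi1); rewrite Exy set22.
- by apply: (subsetP Pi2); rewrite Exy set21.
- by apply: (subsetP Pi2); rewrite Exy set22.
Qed.


Definition levrel p : rel B := fun x y =>
  has (fun i => [&& lev i == p, x \in nth set0 Tp i & y \in nth set0 Tp i]) (iota 0 (size Tp)).

Lemma lev_conn p a b : p \in L -> a \in AP p -> b \in AP p ->
  connect (levrel p) (letter a p) (letter b p).
Proof.
move=> pL aP bP.
case: hval => _ _ conOn _ [acGp _]; case: st => [[_ [_ conTp]] subTp].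
have step : forall c z, [&& c \in AP p, z \in AP p & mc_adj G c z] ->
    connect (levrel p) (letter c p) (letter z p).
  move=> c z /and3P[cP zP /hasP[C CG /andP[cC zC]]].
  have [e|ne] := eqVneq (letter c p) (letter z p); first by rewrite e connect0.
  have cD : letter c p \in phP p C.
    by rewrite inphP; apply/exists_inP; exists c; rewrite // cP eqxx.
  have zD : letter z p \in phP p C.
    by rewrite inphP; apply/exists_inP; exists z; rewrite // zP eqxx.
  have big : 1 < #|phP p C| by apply/card_gt1P; exists (letter c p), (letter z p).
  have DGp := big_in_Gp pL CG big.
  have hl : index (phP p C) Gp < size Gp by rewrite index_mem.
  have := lemL acGp conTp subTp hl; rewrite nth_index // => /(_ _ _ cD zD).
  apply: connect_sub => x y /hasP[e eT /and3P[xe ye eD]].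
  apply: connect1; apply/hasP; exists (index e Tp); first by rewrite mem_iota /= index_mem.
  have -> : lev (index e Tp) = p.
    by symmetry; apply: (lev_uniq _ pL CG); rewrite ?index_mem ?nth_index.
  by rewrite nth_index // xe ye eqxx.
have := conOn p pL a b aP bP; case/connectP => q pth ->.
elim: q a pth {aP} => [|z q IH] c //= /andP[cz pth].
exact: connect_trans (step _ _ cz) (IH _ pth).
Qed.


Definition relT p : rel A := fun x y => [&& x \in AP p, y \in AP p & mc_adj T x y].

Lemma adjT i : i < size Tp -> mc_adj T (la i) (lb i) /\ mc_adj T (lb i) (la i).
Proof.
move=> iT; have iT' : nth set0 T i \in T by rewrite mem_nth // sizeT.
by split; apply/hasP; exists (nth set0 T i); rewrite // nthT // set21 set22.
Qed.

Lemma T_conn p a b : a \in AP p -> b \in AP p -> connect (relT p) a b.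
Proof.
pose M := \max_(c : A) size (v c).
have hM : forall c, size (v c) <= M by move=> c; apply: (@leq_bigmax _ (fun c => size (v c))).
suff H : forall n p, M - size p <= n -> forall a b, a \in AP p -> b \in AP p -> connect (relT p) a b.
  by move=> aP bP; exact: (H _ p (leqnn _) a b aP bP).
elim=> [|n IH] {}p hp {}a {}b aP bP.
  move: aP; rewrite inE => /andP[_ sa]; move: hp.
  by rewrite leqn0 subn_eq0 leqNgt (leq_trans sa (hM a)).
have same : forall c d, c \in AP p -> d \in AP p -> letter c p = letter d p -> connect (relT p) c d.
  move=> c d cP dP e; have [->|cd] := eqVneq c d; first exact: connect0.
  have [c' d'] := AP_deeper cP dP e cd.
  have hp' : M - size (rcons p (letter c p)) <= n.
    by rewrite size_rcons subnS -subn1 leq_subLR add1n.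
  apply: connect_sub (IH _ hp' c d c' d') => x y /and3P[xP yP xy]; apply: connect1.
  by rewrite /relT xy (subsetP (AP_sub _ _) x xP) (subsetP (AP_sub _ _) y yP).
have [e|ne] := eqVneq (letter a p) (letter b p); first exact: same.
have pL : p \in L.
  have ab : a != b by apply: contra ne => /eqP ->.
  by rewrite -(lcp_AP aP bP ne) Lin.
have step : forall y z, levrel p y z ->
    (forall b', b' \in AP p -> letter b' p = y -> connect (relT p) a b') ->
    forall b', b' \in AP p -> letter b' p = z -> connect (relT p) a b'.
  move=> y z /hasP[i iI /and3P[/eqP li yi zi]] Hy b' b'P bz.
  have iT : i < size Tp by rewrite mem_iota in iI.
  have [_ _ /andP[laP lbP] dif Ei] := liftP iT.
  rewrite li in laP lbP dif Ei.
  have [e1 e2] := adjT iT.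
  have r1 : relT p (la i) (lb i) by rewrite /relT laP lbP e1.
  have r2 : relT p (lb i) (la i) by rewrite /relT laP lbP e2.
  have [ca cb] : connect (relT p) a (la i) /\ connect (relT p) a (lb i).
    move: yi; rewrite Ei => /set2P[] ye.
      have h := Hy _ laP (esym ye); split => //; exact: connect_trans h (connect1 r1).
    have h := Hy _ lbP (esym ye); split => //; exact: connect_trans h (connect1 r2).
  move: zi; rewrite Ei => /set2P[] ze.
    by apply: connect_trans ca (same _ _ laP b'P _); rewrite bz.
  by apply: connect_trans cb (same _ _ lbP b'P _); rewrite bz.
have := lev_conn pL aP bP; case/connectP => q pth lq.
have gen : forall q y, path (levrel p) y q ->
    (forall b', b' \in AP p -> letter b' p = y -> connect (relT p) a b') ->
    forall b', b' \in AP p -> letter b' p = last y q -> connect (relT p) a b'.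
  elim=> [|z q' IHq] y //= /andP[yz pth'] Hy.
  exact: IHq _ pth' (step _ _ yz Hy).
apply: (gen _ _ pth _ b bP lq) => bb bbP eb.
exact: same aP bbP (esym eb).
Qed.


Lemma T_acyclic : mc_acyclic T.
Proof.
move=> n vs cs [vinj [hc n0]] i j; exfalso.
case: st => [[_ [acTp _]] _].
have oS : forall k : 'I_n.+2, ordS k != k.
  move=> k; apply/negP => /eqP/(congr1 (@nat_of_ord n.+2)); rewrite ordS_val.
  case: ifP => kn; first by move/eqP; rewrite eqn_leq ltnn.
  by move=> h; move: kn; rewrite -h.
have E : forall k, cs k < size Tp /\
    ((vs k = la (cs k) /\ vs (ordS k) = lb (cs k)) \/ (vs k = lb (cs k) /\ vs (ordS k) = la (cs k))).
  move=> k; have [ck [h1 h2]] := hc k; rewrite sizeT in ck; split => //.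
  rewrite nthT // in h1 h2.
  have d : vs k != vs (ordS k) by apply: contra (oS k) => /eqP/vinj e; rewrite -e.
  move: h1 h2 d => /set2P[] -> /set2P[] ->; rewrite ?eqxx //; by [left | right].
have LK : forall k, [/\ cs k < size Tp,
    lcp (v (vs k)) (v (vs (ordS k))) = lev (cs k),
    (vs k \in AP (lev (cs k))) && (vs (ordS k) \in AP (lev (cs k))),
    letter (vs k) (lev (cs k)) != letter (vs (ordS k)) (lev (cs k)) &
    nth set0 Tp (cs k) = [set letter (vs k) (lev (cs k)); letter (vs (ordS k)) (lev (cs k))]].
  move=> k; have [ck h] := E k.
  have [_ _ /andP[laP lbP] dif Ei] := liftP ck.
  case: h => [[-> ->]|[-> ->]]; split => //; rewrite ?laP ?lbP //.
  - exact: lcp_AP.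
  - rewrite lcpC; apply: lcp_AP => //; by rewrite eq_sym.
  - by rewrite eq_sym.
  - by rewrite Ei setUC.
pose ws := [seq v (vs k) | k <- enum 'I_n.+2].
pose s := foldr (@lcp B) (v (vs ord0)) ws.
have inws : forall k, v (vs k) \in v (vs ord0) :: ws.
  by move=> k; rewrite inE; apply/orP; right; apply: map_f; rewrite mem_enum.
have sp : forall k, prefix s (v (vs k)) by move=> k; apply: foldr_lcp_pref.
have sl : forall k, prefix s (lev (cs k)).
  by move=> k; have [_ e _ _ _] := LK k; rewrite -e; apply: lcp_max.
have levAP : forall k, size (lev (cs k)) < size (v (vs k)).
  by move=> k; have [_ _ /andP[h _] _ _] := LK k; move: h; rewrite inE => /andP[].
have sAP : forall k, vs k \in AP s.
  move=> k; rewrite inE sp /=; apply: leq_ltn_trans (levAP k).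
  exact: size_prefix.
have [k0 lk0] : exists k0, lev (cs k0) = s.
  case: (pickP (fun k => lev (cs k) == s)) => [k0 /eqP h|H]; first by exists k0.
  exfalso.
  have ss : forall k, size s < size (lev (cs k)).
    move=> k; rewrite ltnNge; apply/negP => h.
    by move: (H k); rewrite (prefix_size_eq (sl k) h) eqxx.
  have lk : forall k, letter (vs k) s = letter (vs (ordS k)) s.
    move=> k; have [_ _ /andP[h1 h2] _ _] := LK k.
    by rewrite (letter_deep h1 (sl k) (ss k)) (letter_deep h2 (sl k) (ss k)).
  have all_eq : forall m, m < n.+2 -> letter (vs (inord m)) s = letter (vs ord0) s.
    elim=> [|m IHm] hm.
      by congr letter; congr vs; apply/val_inj; rewrite /= inordK.
    have mn : m < n.+1 := hm.
    have -> : (inord m.+1 : 'I_n.+2) = ordS (inord m).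
      apply/val_inj; change (nat_of_ord (inord m.+1 : 'I_n.+2) = nat_of_ord (ordS (inord m : 'I_n.+2))).
      by rewrite ordS_val (inordK hm) (inordK (ltnW hm)) mn.
    by rewrite -lk IHm // ltnW.
  have pr : forall w, w \in v (vs ord0) :: ws -> prefix (rcons s (letter (vs ord0) s)) w.
    move=> w; rewrite inE => /orP[/eqP->|/mapP[k _ ->]].
      by rewrite (prefix_rconsE x0) sp /= eqxx andbT; move: (sAP ord0); rewrite inE => /andP[].
    rewrite -(all_eq k (ltn_ord k)) inord_val (prefix_rconsE x0) sp eqxx andbT /=.
    by move: (sAP k); rewrite inE => /andP[].
  have := size_prefix (foldr_lcp_max pr); rewrite size_rcons -/s.
  by rewrite ltnn.
have [i0T _ /andP[aP0 bP0] dif0 Ei0] := LK k0.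
rewrite lk0 in aP0 bP0 dif0 Ei0.
set x := letter (vs k0) s in dif0 Ei0.
set y := letter (vs (ordS k0)) s in dif0 Ei0.
have nk : forall k, k != k0 -> cs k != cs k0.
  move=> k kk; apply/negP => /eqP ck.
  have [_ h] := E k; have [_ h0] := E k0; rewrite ck in h.
  have ne : forall a b : 'I_n.+2, a != b -> vs a != vs b.
    by move=> a b ab; apply: contra ab => /eqP/vinj ->.
  case: h h0 => [[h1 h2]|[h1 h2]] [[h3 h4]|[h3 h4]];
    try by move: (ne _ _ kk); rewrite h1 h3 eqxx.
  -
    have e1 : k = ordS k0 by apply: vinj; rewrite h1 h4.
    have e2 : ordS k = k0 by apply: vinj; rewrite h2 h3.
    have nz : n = 0 by apply: (@ordSS n k0); rewrite -e1 e2.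
    by case: (ord2_cases nz kk) => [[ek ek0]|[ek ek0]]; apply: (n0 nz); rewrite -ek -ek0 ck.
  - have e1 : k = ordS k0 by apply: vinj; rewrite h1 h4.
    have e2 : ordS k = k0 by apply: vinj; rewrite h2 h3.
    have nz : n = 0 by apply: (@ordSS n k0); rewrite -e1 e2.
    by case: (ord2_cases nz kk) => [[ek ek0]|[ek ek0]]; apply: (n0 nz); rewrite -ek -ek0 ck.
have stepk : forall k, k != k0 ->
    connect (avoid Tp (cs k0)) (letter (vs k) s) (letter (vs (ordS k)) s).
  move=> k kk; have [ck _ /andP[h1 h2] _ Ek] := LK k.
  have [e|ne] := eqVneq (lev (cs k)) s.
    apply: connect1; apply/hasP; exists (cs k); first by rewrite mem_iota.
    by rewrite nk //= Ek e set21 set22.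
  have ss : size s < size (lev (cs k)).
    rewrite ltnNge; apply/negP => h.
    by move: ne; rewrite (prefix_size_eq (sl k) h) eqxx.
  by rewrite (letter_deep h1 (sl k) ss) (letter_deep h2 (sl k) ss) connect0.
pose f m := letter (vs (inord m)) s.
have fS : forall m, m < n.+1 -> (inord m != k0) ->
    connect (avoid Tp (cs k0)) (f m) (f m.+1).
  move=> m mn mk; rewrite /f.
  have -> : (inord m.+1 : 'I_n.+2) = ordS (inord m).
    apply/val_inj; change (nat_of_ord (inord m.+1 : 'I_n.+2) = nat_of_ord (ordS (inord m : 'I_n.+2))).
    by rewrite ordS_val (inordK (_ : m.+1 < n.+2)) // (inordK (ltnW (_ : m.+1 < n.+2))) // mn.
  exact: stepk.
have ch : forall a b, a <= b -> b <= n.+1 -> (forall m, a <= m < b -> (inord m : 'I_n.+2) != k0) ->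
    connect (avoid Tp (cs k0)) (f a) (f b).
  move=> a; elim=> [|b IHb] ab bn H.
    by move: ab; rewrite leqn0 => /eqP ->; apply: connect0.
  case: (ltnP a b.+1) => [ab'|ba]; last by have -> : a = b.+1 by apply/eqP; rewrite eqn_leq ab ba.
  apply: connect_trans (IHb _ (ltnW bn) _) (fS _ bn (H _ _)) => //.
    by move=> m /andP[am mb]; apply: H; rewrite am ltnW.
  by rewrite -ltnS ab' leqnn.
have fk : forall k : 'I_n.+2, f k = letter (vs k) s by move=> k; rewrite /f inord_val.
have Rsym := avoid_sym Tp (cs k0).
have conn : connect (avoid Tp (cs k0)) y x.
  case: (ltnP k0 n.+1) => kn.
    have eS : ordS k0 = inord k0.+1.
      apply/val_inj; change (nat_of_ord (ordS k0) = nat_of_ord (inord k0.+1 : 'I_n.+2)).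
      by rewrite ordS_val kn inordK.
    have c1 : connect (avoid Tp (cs k0)) (f k0.+1) (f n.+1).
      apply: ch => // m /andP[km mn]; apply/negP => /eqP e.
      have := congr1 (@nat_of_ord n.+2) e; rewrite inordK; lia.
    have c2 : connect (avoid Tp (cs k0)) (f n.+1) (f 0).
      have hm : (inord n.+1 : 'I_n.+2) != k0.
        apply/negP => /eqP e; have := congr1 (@nat_of_ord n.+2) e; rewrite inordK; lia.
      have := stepk _ hm; rewrite /f.
      have -> // : ordS (inord n.+1 : 'I_n.+2) = inord 0.
      apply/val_inj; change (nat_of_ord (ordS (inord n.+1 : 'I_n.+2)) = nat_of_ord (inord 0 : 'I_n.+2)).
      by rewrite ordS_val !inordK ?ltnn.
    have c3 : connect (avoid Tp (cs k0)) (f 0) (f k0).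
      apply: ch => //; first exact: ltnW.
      move=> m /andP[_ mk]; apply/negP => /eqP e.
      have := congr1 (@nat_of_ord n.+2) e; rewrite inordK; lia.
    by rewrite /y eS -/(f k0.+1) /x -fk; apply: connect_trans c1 (connect_trans c2 c3).
  have kv : val k0 = n.+1 by apply/eqP; rewrite eqn_leq kn -ltnS ltn_ord.
  have eS : ordS k0 = inord 0.
    apply/val_inj; change (nat_of_ord (ordS k0) = nat_of_ord (inord 0 : 'I_n.+2)).
    by rewrite ordS_val kv ltnn inordK.
  rewrite /y eS -/(f 0) /x -fk kv.
  apply: ch => // m /andP[_ mk]; apply/negP => /eqP e.
  have := congr1 (@nat_of_ord n.+2) e; rewrite inordK; lia.
have := lemK acTp i0T dif0; rewrite Ei0 => /(_ (set21 _ _) (set22 _ _)).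
by rewrite sym_connect_sym // conn.
Qed.


Lemma phP_pair i : i < size Tp ->
  phP (lev i) [set la i; lb i] = nth set0 Tp i.
Proof.
move=> iT; have [_ _ /andP[laP lbP] _ Ei] := liftP iT; rewrite Ei.
apply/setP => y; rewrite inphP; apply/exists_inP/set2P.
  by move=> [a /set2P[]-> /andP[_ /eqP ->]]; [left | right].
by case=> ->; [exists (la i) | exists (lb i)]; rewrite ?set21 ?set22 ?laP ?lbP ?eqxx.
Qed.

Lemma big_phP i p : i < size Tp ->
  (1 < #|phP p [set la i; lb i]|) = (p == lev i).
Proof.
move=> iT; have [_ _ /andP[laP lbP] dif Ei] := liftP iT.
apply/idP/idP; last by move/eqP ->; rewrite phP_pair // Ei cards2 dif.
case/card_gt1P => y1 [y2 [h1 h2 y12]].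
move: h1 h2; rewrite !inphP => /exists_inP[a1 a1s /andP[a1P /eqP e1]] /exists_inP[a2 a2s /andP[a2P /eqP e2]].
have a12 : a1 != a2 by apply: contra y12 => /eqP e; rewrite -e1 -e2 e.
have dl : letter a1 p != letter a2 p by rewrite e1 e2.
have := lcp_AP a1P a2P dl; have := lcp_AP laP lbP dif.
move: a1s a2s a12 => /set2P[]-> /set2P[]->; rewrite ?eqxx // => _ E1 E2.
  by rewrite -E2 E1 eqxx.
by rewrite -E2 lcpC E1 eqxx.
Qed.

Lemma T_eq : mc_eq Tp (sig T).
Proof.
have fT : [seq C <- Tp | 1 < #|(C : {set B})|] = Tp.
  apply/all_filterP; apply/allP => e eT.
  by have [x [y [xy ->]]] := Tp_pair eT; rewrite cards2 xy.
rewrite /mc_eq fT perm_sym.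
have -> : sig T = [seq phP p (nth set0 T i) | p <- L, i <- iota 0 (size Tp)].
  by rewrite /sig -{1}(mkseq_nth set0 T) sizeT /mkseq allpairs_mapr.
rewrite -{2}(mkseq_nth set0 Tp).
apply: filter_allpairs_swap => i; rewrite mem_iota /= => iT.
rewrite filter_map nthT //.
rewrite (eq_in_filter (a2 := pred1 (lev i))); last by move=> p _ /=; rewrite big_phP.
have [levL _ _ _ _] := liftP iT.
by rewrite filter_pred1_uniq //= phP_pair.
Qed.


Lemma core_tl : spanning_tree T G /\ valid Tp T.
Proof.
case: st => [[_ [acTp conTp]] _].
have AP0 : forall a, a \in AP [::] by move=> a; rewrite inE prefix0s /= lt0n size_eq0 vne.
have conT : mc_connected T.
  move=> u w; apply: connect_sub (T_conn (AP0 u) (AP0 w)) => x y /and3P[_ _ h].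
  exact: connect1.
split; last first.
  split => //; [exact: T_acyclic | move=> p _ u w uP wP; exact: T_conn | exact: T_eq].
split.
  split; last by split; [exact: T_acyclic | exact: conT].
  apply/allP => C /(nthP set0)[i iT <-]; rewrite sizeT in iT; rewrite nthT // cards2.
  have [_ _ _ dif _] := liftP iT.
  suff -> : la i != lb i by [].
  by apply: contra dif => /eqP ->.
move=> C /(nthP set0)[i iT <-]; rewrite sizeT in iT; rewrite nthT //.
have [_ [Ci CiG /andP[laC lbC]] _ _ _] := liftP iT.
by apply/hasP; exists Ci => //; apply/subsetP => z /set2P[]->.
Qed.

End Main.

Theorem core_thm (G : seq {set A}) (Gp Tp : seq {set B}) :
  valid Gp G -> spanning_tree Tp Gp -> exists T, spanning_tree T G /\ valid Tp T.
Proof.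
move=> hval st.
case: (pickP (fun _ : A => true)) => [a0 _|A0].
  have [tl [stl Htl]] := @lift_seq _ _ set0 (dt a0) (Lift G) Tp
      (fun i iT => lift_exists hval st (mem_nth set0 iT)).
  by exists (T tl); apply: (core_tl hval st stl Htl).
have Tp0 : Tp = [::].
  case: Tp st => [//|e Tp'] st'; have [t [_ [C _ /andP[h _]] _ _ _]] := lift_exists hval st' (mem_head e Tp').
  by move: (A0 t.1.2).
subst Tp; exists [::]; case: st => [[_ [acTp conTp]] _].
have ac0 : mc_acyclic ([::] : seq {set A}) by move=> n vs cs [_ [h _]]; case: (h ord0).
have con0 : forall S, mc_connected_on S ([::] : seq {set A}) by move=> S u; move: (A0 u).
split.
  split; last by move=> e.
  by split => //; split => // u; move: (A0 u).
split => //; first by move=> u; move: (A0 u).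
by rewrite /mc_eq /sig allpairs0r.
Qed.

End Core.

Section Final.
Variables (A B : finType) (sigma : A -> seq B) (w : seq B).
Hypothesis rm : return_morphism sigma w.

Lemma sig_inj : injective sigma.
Proof.
case: rm => _ [inj _] a b e.
have : morph sigma [:: a] = morph sigma [:: b] by rewrite /morph /= e.
by move/inj => [].
Qed.

Lemma occ_in i x : size w <= size x -> i <= size x - size w ->
  take (size w) (drop i x) = w -> i \in occurrences w x.
Proof.
move=> h1 h2 h3; rewrite /occurrences mem_filter mem_iota h1 h3 eqxx /=.
by rewrite add0n ltnS h2.
Qed.

Lemma w_pref a : take (size w) (sigma a ++ w) = w.
Proof.
case: rm => _ [_ [_ occ]].
have : 0 \in occurrences w (sigma a ++ w) by rewrite occ mem_head.
by rewrite /occurrences mem_filter drop0 => /andP[/andP[_ /eqP ->] _].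
Qed.

Lemma sig_suffix_free a b : suffix (sigma a) (sigma b) -> a = b.
Proof.
case: rm => _ [_ [ne occ]] /suffixP[u eb].
have h : size u \in occurrences w (sigma b ++ w).
  apply: occ_in; rewrite ?eb ?size_cat.
  - by rewrite leq_addl.
  - by rewrite addnK leq_addr.
  by rewrite -catA drop_size_cat // w_pref.
move: h; rewrite occ !inE => /orP[/eqP|/eqP] h.
  by apply: sig_inj; move: eb; move/eqP: h; rewrite size_eq0 => /eqP ->.
have : size (sigma a) = 0.
  by move: h; rewrite eb size_cat => /eqP; rewrite -{1}[size u]addn0 eqn_add2l eq_sym => /eqP.
by move/eqP; rewrite size_eq0 => /eqP e; move: (ne a); rewrite e.
Qed.

Lemma sig_prefix_free a b : prefix (sigma a ++ w) (sigma b ++ w) -> a = b.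
Proof.
case: rm => _ [_ [ne occ]] pr.
have [lt|ge] := ltnP (size (sigma a)) (size (sigma b)).
  move: pr => /prefixP[r er].
  have h : size (sigma a) \in occurrences w (sigma b ++ w).
    apply: occ_in; rewrite ?er ?size_cat.
    - by rewrite -addnA addnCA leq_addr.
    - by rewrite addnAC addnK leq_addr.
    by rewrite -catA drop_size_cat // take_size_cat.
  move: h; rewrite occ !inE => /orP[/eqP|/eqP] h.
    by move: (ne a); rewrite -size_eq0 h eqxx.
  by move: lt; rewrite h ltnn.
have := size_prefix pr; rewrite !size_cat leq_add2r => le.
have := prefix_size_eq pr; rewrite !size_cat leq_add2r ge => /(_ isT) /eqP.
have es : size (sigma a) = size (sigma b) by apply/eqP; rewrite eqn_leq le ge.
by rewrite eqseq_cat // => /andP[/eqP /sig_inj].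
Qed.

End Final.

Section Final2.
Variables (A B : finType) (sigma : A -> seq B) (w : seq B).

Lemma AL_AP s : AL sigma s = AP (fun a => rev (sigma a)) (rev s).
Proof. by apply/setP => a; rewrite !inE /suffix !size_rev. Qed.

Lemma phiL_phP s C : phiL sigma s C = phP (fun a => rev (sigma a)) (rev s) C.
Proof.
apply/setP => b; rewrite !inE; apply: eq_existsb => a.
by rewrite /suffix rev_cons.
Qed.

Lemma sigL G : sigmaL sigma G = sig (fun a => rev (sigma a)) (map rev (TL sigma)) G.
Proof. by rewrite /sig allpairs_mapl; apply: eq_allpairs => s C; rewrite phiL_phP. Qed.

Lemma left_iff G' G : left_valid sigma G' G <->
  valid (fun a => rev (sigma a)) (map rev (TL sigma)) G' G.
Proof.
rewrite /left_valid /valid sigL; split; case=> h1 h2 h3 h4 h5; split => //.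
  by move=> p /mapP[s sT ->]; rewrite -AL_AP; apply: h3.
by move=> s sT; rewrite AL_AP; apply: h3; apply: map_f.
Qed.

End Final2.

Theorem mainTheorem11 (A B : finType) (sigma : A -> seq B) (w : seq B) :
  return_morphism sigma w ->
  (forall w' : seq B, return_morphism sigma w' -> size w' <= size w) ->
  (forall (G' : seq {set B}) (G : seq {set A}),
     left_valid sigma G' G ->
     forall T' : seq {set B}, spanning_tree T' G' ->
       exists T : seq {set A}, spanning_tree T G /\ left_valid sigma T' T) /\
  (forall (G' : seq {set B}) (G : seq {set A}),
     right_valid sigma w G' G ->
     forall T' : seq {set B}, spanning_tree T' G' ->
       exists T : seq {set A}, spanning_tree T G /\ right_valid sigma w T' T).
Proof.
move=> rm _.
have [wne [_ [ne _]]] := rm.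
have [x0 _] : exists x : B, true by case: (w) wne => [|x _] //; exists x.
split.
  move=> G' G /left_iff hv T' st.
  have vpf : forall a b, prefix (rev (sigma a)) (rev (sigma b)) -> a = b.
    by move=> a b; apply: (sig_suffix_free rm).
  have vne : forall a, rev (sigma a) != [::].
    by move=> a; rewrite -size_eq0 size_rev size_eq0 ne.
  have Lu : uniq (map rev (TL sigma)) by rewrite (map_inj_uniq (can_inj (@revK _))) undup_uniq.
  have Lin : forall a b, a != b -> lcp (rev (sigma a)) (rev (sigma b)) \in map rev (TL sigma).
    move=> a b ab; apply/mapP; exists (lcs (sigma a) (sigma b)); last by rewrite /lcs revK.
    rewrite /TL mem_undup.
    by apply: (@image_f _ _ (fun p : A * A => lcs (sigma p.1) (sigma p.2)) _ (a, b)).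
  have [T [sT vT]] := core_thm x0 vpf vne Lu Lin hv st.
  by exists T; split => //; apply/left_iff.
move=> G' G hv T' st.
have vpf : forall a b, prefix (sigma a ++ w) (sigma b ++ w) -> a = b.
  by move=> a b; apply: (sig_prefix_free rm).
have vne : forall a, sigma a ++ w != [::].
  by move=> a; rewrite -size_eq0 size_cat addn_eq0 !size_eq0 (negbTE (ne a)).
have Lu : uniq (TR sigma w) by apply: undup_uniq.
have Lin : forall a b, a != b -> lcp (sigma a ++ w) (sigma b ++ w) \in TR sigma w.
  move=> a b ab; rewrite /TR mem_undup.
  by apply: (@image_f _ _ (fun p : A * A => lcp (sigma p.1 ++ w) (sigma p.2 ++ w)) _ (a, b)).
exact: (core_thm x0 vpf vne Lu Lin hv st).
Qed.
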